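(* Let $K$ be a field of characteristic zero, $n\ge2$, and let $u=1+\sum_{i=1}^na_i\in(1+\mathfrak{a}_{n,n-1})^*$ with $a_i\in\mathfrak{p}_{Ci}$. Then \begin{enumerate} \item for all $i$, $1+a_i$, viewed as a linear map $P_n\to P_n$, has finite-dimensional kernel and cokernel, and $\sum_{i=1}^n{\rm ind}(1+a_i)=0$; \item if also $u=1+\sum_{i=1}^na_i'$ with $a_i'\in\mathfrak{p}_{Ci}$, then ${\rm ind}(1+a_i)={\rm ind}(1+a_i')$ for all $i$. \end{enumerate}
   Context: $\mathbb{S}_n$ is the $K$-algebra generated by $x_1,\dots,x_n,y_1,\dots,y_n$ with defining relations $y_ix_i=1$ and $[x_i,y_j]=[x_i,x_j]=[y_i,y_j]=0$ for $i\ne j$; it acts faithfully on $P_n=K[x_1,\dots,x_n]$ by $x_i*x^\alpha=x^{\alpha+e_i}$, $y_i*x^\alpha=x^{\alpha-e_i}$ if $\alpha_i>0$ and $0$ otherwise, so $\mathbb{S}_n\subseteq{\rm End}_K(P_n)$. $\mathfrak{p}_i$ is the ideal generated by all $x_i^ky_i^l-x_i^{k+1}y_i^{l+1}$ ($k,l\in\mathbb{N}$); $\mathfrak{p}_I=\bigcap_{i\in I}\mathfrak{p}_i$, $\mathfrak{p}_{Ci}=\bigcap_{j\ne i}\mathfrak{p}_j$; $\mathfrak{a}_{n,n-1}=\sum_{|I|=n-1}\mathfrak{p}_I=\sum_i\mathfrak{p}_{Ci}$. $(1+\mathfrak b)^*$ is the group of units of $\mathbb{S}_n$ of the form $1+b$,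 $b\in\mathfrak b$. For a linear map $\varphi$ with finite-dimensional kernel and cokernel, ${\rm ind}(\varphi)=\dim\ker\varphi-\dim{\rm coker}\,\varphi$. *)

(* Defs.v *)
From HB Require Import structures.
From mathcomp Require Import all_boot all_order all_algebra.
From mathcomp Require Import mpoly.
From Stdlib Require Import ClassicalEpsilon.

Set Implicit Arguments.
Unset Strict Implicit.
Unset Printing Implicit Defensive.

Import GRing.Theory.
Local Open Scope ring_scope.

(* Elements of S_n are represented through their (faithful) action on P_n,
   i.e. as maps P_n -> P_n; S_n is the subalgebra of End_K(P_n) generated
   by the operators x_i and y_i below.                                     *)

Section Jacobian.
Variables (K : fieldType) (n : nat).

Definition Pn := {mpoly K[n]}.
Definition op := Pn -> Pn.

Definition opx (i : 'I_n) : op := fun p => 'X_i * p.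

Definition opy (i : 'I_n) : op := fun p =>
  \sum_(m <- msupp p)
     p@_m *: (if (0 < m i)%N then 'X_[mnm_sub m (mnm1 i)] else 0).

Definition op1 : op := fun p => p.
Definition op0 : op := fun _ => 0.
Definition opadd (f g : op) : op := fun p => f p + g p.
Definition opopp (f : op) : op := fun p => - f p.
Definition opscale (c : K) (f : op) : op := fun p => c *: f p.
Definition opmul (f g : op) : op := fun p => f (g p).
Definition opexp (f : op) (k : nat) : op := iter k (opmul f) op1.

Inductive inS : op -> Prop :=
  | inS_x i : inS (opx i)
  | inS_y i : inS (opy i)
  | inS_1 : inS op1
  | inS_add f g : inS f -> inS g -> inS (opadd f g)
  | inS_scale c f : inS f -> inS (opscale c f)
  | inS_mul f g : inS f -> inS g -> inS (opmul f g).

Definition pgen (i : 'I_n) (k l : nat) : op :=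
  opadd (opmul (opexp (opx i) k) (opexp (opy i) l))
        (opopp (opmul (opexp (opx i) k.+1) (opexp (opy i) l.+1))).

Inductive inp (i : 'I_n) : op -> Prop :=
  | inp_gen k l : inp i (pgen i k l)
  | inp_0 : inp i op0
  | inp_add a b : inp i a -> inp i b -> inp i (opadd a b)
  | inp_lmul s a : inS s -> inp i a -> inp i (opmul s a)
  | inp_rmul a s : inS s -> inp i a -> inp i (opmul a s).

Definition inpC (i : 'I_n) (a : op) : Prop := forall j : 'I_n, j != i -> inp j a.

Definition unitS (u : op) : Prop :=
  inS u /\ exists v, inS v /\ (forall p, u (v p) = p) /\ (forall p, v (u p) = p).

Definition one_plus_sum (a : 'I_n -> op) : op :=
  fun p => p + \sum_(i < n) a i p.

Definition lincomb (B : seq Pn) (c : nat -> K) : Pn :=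
  \sum_(j < size B) c j *: B`_j.

Definition fd_ker (f : op) : Prop :=
  exists B : seq Pn, (forall b, b \in B -> f b = 0) /\
    (forall p, f p = 0 -> exists c, p = lincomb B c).

Definition fd_coker (f : op) : Prop :=
  exists C : seq Pn, forall p, exists q c, p = f q + lincomb C c.

Definition ker_basis (f : op) (B : seq Pn) : Prop :=
  (forall b, b \in B -> f b = 0) /\
  (forall p, f p = 0 -> exists c, p = lincomb B c) /\
  (forall c, lincomb B c = 0 -> forall j, (j < size B)%N -> c j = 0).

Definition coker_basis (f : op) (C : seq Pn) : Prop :=
  (forall p, exists q c, p = f q + lincomb C c) /\
  (forall c, (exists q, lincomb C c = f q) -> forall j, (j < size C)%N -> c j = 0).

Definition dim_ker (f : op) : nat :=
  epsilon (inhabits 0%N) (fun d => exists B, size B = d /\ ker_basis f B).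

Definition dim_coker (f : op) : nat :=
  epsilon (inhabits 0%N) (fun d => exists C, size C = d /\ coker_basis f C).

Definition ind (f : op) : int := (dim_ker f)%:Z - (dim_coker f)%:Z.

End Jacobian.

(* Main.v *)
Require Import Defs.
From HB Require Import structures.
From mathcomp Require Import all_boot all_order all_algebra.
From mathcomp Require Import mpoly.
From Stdlib Require Import ClassicalEpsilon Classical.
From mathcomp Require Import zify.
Import GRing.Theory.
Local Open Scope ring_scope.
Set Implicit Arguments.
Unset Strict Implicit.
Unset Printing Implicit Defensive.

Section LinAlg.
Variables (K : fieldType) (V : lmodType K).
Implicit Types (A B C : V -> Prop) (L D : seq V) (c : nat -> K).

Definition lc L c : V := \sum_(j < size L) c j *: L`_j.
Definition subsp A := A 0 /\ forall k x y, A x -> A y -> A (k *: x + y).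
Definition incl A B := forall x, A x -> B x.
Definition spans A B L := forall b, B b -> exists a c, A a /\ b = a + lc L c.
Definition indep A L := forall c, A (lc L c) -> forall j, (j < size L)%N -> c j = 0.
Definition inB B L := forall j, (j < size L)%N -> B L`_j.
Definition basis A B L := [/\ inB B L, spans A B L & indep A L].
Definition rdim A B d := exists L, size L = d /\ basis A B L.

Lemma subsp0 A : subsp A -> A 0. Proof. by case. Qed.
Lemma subspD A x y : subsp A -> A x -> A y -> A (x + y).
Proof. by case=> _ H ax ay; have := H 1 x y ax ay; rewrite scale1r. Qed.
Lemma subspZ A k x : subsp A -> A x -> A (k *: x).
Proof. by case=> H0 H ax; have := H k x 0 ax H0; rewrite addr0. Qed.
Lemma subspN A x : subsp A -> A x -> A (- x).
Proof. by move=> sA ax; rewrite -scaleN1r; apply: subspZ. Qed.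
Lemma subspB A x y : subsp A -> A x -> A y -> A (x - y).
Proof. by move=> sA ax ay; apply: subspD => //; apply: subspN. Qed.
Lemma subsp_sum A (I : Type) (r : seq I) (P : pred I) (F : I -> V) :
  subsp A -> (forall i, P i -> A (F i)) -> A (\sum_(i <- r | P i) F i).
Proof.
move=> sA HF; apply: (big_ind A) => //; first exact: subsp0.
by move=> x y; apply: subspD.
Qed.

Lemma lc_nil c : lc [::] c = 0. Proof. by rewrite /lc big_ord0. Qed.
Lemma lc_rcons L x c : lc (rcons L x) c = lc L c + c (size L) *: x.
Proof.
rewrite /lc size_rcons big_ord_recr /= nth_rcons ltnn eqxx; congr (_ + _).
by apply: eq_bigr => j _; rewrite nth_rcons ltn_ord.
Qed.
Lemma lc_cat L1 L2 c :
  lc (L1 ++ L2) c = lc L1 c + lc L2 (fun j => c (size L1 + j)%N).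
Proof.
rewrite /lc size_cat big_split_ord /=; congr (_ + _).
  by apply: eq_bigr => j _; rewrite nth_cat ltn_ord.
by apply: eq_bigr => j _; rewrite nth_cat ltnNge leq_addr /= addKn.
Qed.
Lemma lc_ext L c c' : (forall j, (j < size L)%N -> c j = c' j) -> lc L c = lc L c'.
Proof. by move=> H; apply: eq_bigr => j _; rewrite H. Qed.
Lemma lcD L c c' : lc L c + lc L c' = lc L (fun j => c j + c' j).
Proof. by rewrite /lc -big_split; apply: eq_bigr => j _; rewrite scalerDl. Qed.
Lemma lcZ L c k : k *: lc L c = lc L (fun j => k * c j).
Proof. by rewrite /lc scaler_sumr; apply: eq_bigr => j _; rewrite scalerA. Qed.
Lemma lcN L c : - lc L c = lc L (fun j => - c j).
Proof. by rewrite -scaleN1r lcZ; apply: lc_ext => j _; rewrite mulN1r. Qed.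
Lemma lc0 L : lc L (fun _ => 0) = 0.
Proof. by rewrite /lc big1 // => j _; rewrite scale0r. Qed.
Lemma lc_in A L c : subsp A -> inB A L -> A (lc L c).
Proof.
move=> sA H; rewrite /lc; apply: subsp_sum => // j _; case: j => j Hj.
by apply: subspZ => //; apply: H.
Qed.

Definition lin (f : V -> V) := forall k x y, f (k *: x + y) = k *: f x + f y.
Variable f : V -> V.
Hypothesis lf : lin f.
Lemma lin0 : f 0 = 0.
Proof. have := lf 1 0 0; rewrite !scale1r !addr0 => H. by apply: (addrI (f 0)); rewrite -H addr0. Qed.
Lemma linD x y : f (x + y) = f x + f y.
Proof. by have := lf 1 x y; rewrite !scale1r. Qed.
Lemma linZ k x : f (k *: x) = k *: f x.
Proof. by have := lf k x 0; rewrite !addr0 lin0 addr0. Qed.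
Lemma linN x : f (- x) = - f x.
Proof. by rewrite -scaleN1r linZ scaleN1r. Qed.
Lemma linB x y : f (x - y) = f x - f y.
Proof. by rewrite linD linN. Qed.
Lemma lin_sum (I : Type) (r : seq I) (P : pred I) (F : I -> V) :
  f (\sum_(i <- r | P i) F i) = \sum_(i <- r | P i) f (F i).
Proof.
elim: r => [|x r IH]; first by rewrite !big_nil lin0.
by rewrite !big_cons; case: (P x); rewrite ?linD IH.
Qed.
Lemma lin_lc L c : f (lc L c) = lc (map f L) c.
Proof.
rewrite /lc lin_sum size_map; apply: eq_bigr => j _.
by rewrite linZ (nth_map 0) // ltn_ord.
Qed.

End LinAlg.

Section LinAlg2.
Variables (K : fieldType) (V : lmodType K).
Implicit Types (A B C : V -> Prop) (L D : seq V) (c : nat -> K).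

Lemma choice_nat (P : nat -> V -> (nat -> K) -> Prop) :
  (forall j, exists a c, P j a c) ->
  exists (F : nat -> V) (G : nat -> nat -> K), forall j, P j (F j) (G j).
Proof.
move=> H.
have H' : forall j, exists ac : V * (nat -> K), P j ac.1 ac.2.
  by move=> j; have [a [c Hac]] := H j; exists (a, c).
exists (fun j => (proj1_sig (constructive_indefinite_description _ (H' j))).1).
exists (fun j => (proj1_sig (constructive_indefinite_description _ (H' j))).2).
by move=> j; case: (constructive_indefinite_description _ (H' j)).
Qed.

Lemma steinitz A B L D : subsp A -> spans A B L -> inB B D -> indep A D ->
  (size D <= size L)%N.
Proof.
move=> sA sp iD id; rewrite leqNgt; apply/negP => Hlt.
have : forall j, exists a c, A a /\ ((j < size D)%N -> D`_j = a + lc L c).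
  move=> j; case: (ltnP j (size D)) => Hj.
    by have [a [c [Aa E]]] := sp _ (iD j Hj); exists a, c.
  by exists 0, (fun _ => 0); split; [exact: subsp0|] => Hj'; exfalso; move: Hj; rewrite leqNgt; idtac.
case/choice_nat => F [G HFG].
pose M := \matrix_(j < size D, k < size L) G j k.
have Hk : kermx M != 0.
  apply/negP; rewrite kermx_eq0 => /eqP Hr.
  by have := rank_leq_col M; rewrite Hr leqNgt Hlt.
have [i Hi] : exists i, row i (kermx M) != 0.
  case: (pickP (fun i => row i (kermx M) != 0)) => [i Hi|H0]; first by exists i.
  move: Hk; have -> : kermx M = 0; last by rewrite eqxx.
  by apply/row_matrixP => i; rewrite row0; move/negbFE/eqP: (H0 i).
set w := row i (kermx M) in Hi.
have wM : w *m M = 0 by apply/sub_kermxP; exact: row_sub.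
pose e (j : nat) := w 0 (insubd i j).
have eE : forall j : 'I_(size D), e j = w 0 j.
  by move=> j; rewrite /e; congr (w 0 _); apply: val_inj; rewrite val_insubd ltn_ord.
have He : A (lc D e).
  have -> : lc D e = \sum_(j < size D) w 0 j *: F j
                    + \sum_(j < size D) w 0 j *: lc L (G j).
    rewrite -big_split; apply: eq_bigr => j _ /=.
    rewrite eE -scalerDr; congr (_ *: _).
    by have [_ ->] := HFG j.
  have -> : \sum_(j < size D) w 0 j *: lc L (G j) = 0.
    rewrite /lc.
    under eq_bigr => j _ do rewrite scaler_sumr.
    rewrite exchange_big /= big1 // => k _.
    have : (w *m M) 0 k = 0 by rewrite wM mxE.
    rewrite mxE => Hwk.
    rewrite -[RHS](scale0r L`_k) -Hwk scaler_suml; apply: eq_bigr => j _.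
    by rewrite scalerA /M !mxE.
  rewrite addr0; apply: subsp_sum => // j _; apply: subspZ => //; by case: (HFG j).
move/negP: Hi; apply; apply/eqP/rowP => j.
have := id _ He j (ltn_ord j); rewrite eE => ->.
by rewrite mxE.
Qed.

Lemma basis_size A B L L' : subsp A -> basis A B L -> basis A B L' -> size L = size L'.
Proof.
move=> sA [i1 s1 d1] [i2 s2 d2]; apply/eqP; rewrite eqn_leq.
by rewrite (steinitz sA s2 i1 d1) (steinitz sA s1 i2 d2).
Qed.

Lemma rdim_uniq A B d d' : subsp A -> rdim A B d -> rdim A B d' -> d = d'.
Proof. by move=> sA [L [<- bL]] [L' [<- bL']]; apply: basis_size bL bL'. Qed.

Lemma indep_rcons A L b : subsp A -> indep A L ->
  ~ (exists a c, A a /\ b = a + lc L c) -> indep A (rcons L b).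
Proof.
move=> sA iL nb c; rewrite lc_rcons => HA.
have Hc : c (size L) = 0.
  apply/eqP; apply/negP => /negP Hc; apply: nb.
  exists ((c (size L))^-1 *: (lc L c + c (size L) *: b)).
  exists (fun j => - ((c (size L))^-1 * c j)).
  split; first by apply: subspZ.
  rewrite -lcN -lcZ scalerDr scalerA mulVf // scale1r.
  by rewrite addrAC subrr add0r.
move: HA; rewrite Hc scale0r addr0 => HA j; rewrite size_rcons ltnS leq_eqVlt.
by case/orP => [/eqP ->|Hj] //; apply: iL.
Qed.

Lemma ext_step A B D : subsp A -> inB B D -> indep A D -> ~ spans A B D ->
  exists D', [/\ inB B D', indep A D' & size D' = (size D).+1].
Proof.
move=> sA iD dD Hs.
have [b [Bb nb]] : exists b, B b /\ ~ (exists a c, A a /\ b = a + lc D c).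
  by apply: NNPP => N; apply: Hs => b Bb; apply: NNPP => N'; apply: N; exists b.
exists (rcons D b); split; last by rewrite size_rcons.
  move=> j; rewrite size_rcons ltnS leq_eqVlt nth_rcons.
  by case/orP => [/eqP ->|Hj]; [rewrite ltnn eqxx | rewrite Hj; apply: iD].
exact: indep_rcons.
Qed.

Lemma rdim_exists A B L : subsp A -> subsp B -> incl A B ->
  spans A B L -> exists d, rdim A B d.
Proof.
move=> sA sB iAB sp.
suff : forall t D, inB B D -> indep A D -> (size L - size D)%N = t ->
  exists d, rdim A B d.
  by move=> H; apply: (H _ [::]) => // [j|c _ j].
elim=> [|t IH] D iD dD Ht; case: (classic (spans A B D)) => Hs;
  try by exists (size D), D.
  have [D' [iD' dD' sz]] := ext_step sA iD dD Hs.
  have := steinitz sA sp iD' dD'; rewrite sz.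
  by move/eqP: Ht; rewrite subn_eq0 => Ht; rewrite ltnNge Ht.
have [D' [iD' dD' sz]] := ext_step sA iD dD Hs.
apply: (IH _ iD' dD'); rewrite sz.
by rewrite subnS Ht.
Qed.

End LinAlg2.

Section LinAlg3.
Variables (K : fieldType) (V : lmodType K).
Implicit Types (A B C : V -> Prop) (L D : seq V) (c : nat -> K).

Definition img (f : V -> V) A y := exists x, A x /\ y = f x.
Definition capP A B x := A x /\ B x.
Definition sumP A B x := exists a b, [/\ A a, B b & x = a + b].
Definition kerP (f : V -> V) x := f x = 0.
Definition Z0 (x : V) := x = 0.
Definition TT (x : V) := True.

Lemma Z0_subsp : subsp Z0.
Proof. by split => // k x y -> ->; rewrite scaler0 addr0. Qed.
Lemma TT_subsp : subsp TT. Proof. by []. Qed.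
Lemma cap_subsp A B : subsp A -> subsp B -> subsp (capP A B).
Proof.
move=> sA sB; split; first by split; apply: subsp0.
by move=> k x y [ax bx] [ay b_y]; split; case: sA => _; [|case: sB => _]; auto.
Qed.
Lemma sum_subsp A B : subsp A -> subsp B -> subsp (sumP A B).
Proof.
move=> sA sB; split; first by exists 0, 0; split; rewrite ?addr0 //; apply: subsp0.
move=> k x y [a [b [Aa Bb ->]]] [a' [b' [Aa' Bb' ->]]].
exists (k *: a + a'), (k *: b + b'); split; first by case: sA => _; auto.
  by case: sB => _; auto.
by rewrite scalerDr addrACA.
Qed.
Lemma img_subsp f A : lin f -> subsp A -> subsp (img f A).
Proof.
move=> lf sA; split; first by exists 0; split; [apply: subsp0 | rewrite lin0].
move=> k x y [a [Aa ->]] [b [Ab ->]]; exists (k *: a + b); split.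
  by case: sA => _; auto.
by rewrite lf.
Qed.
Lemma ker_subsp f : lin f -> subsp (kerP f).
Proof.
move=> lf; split; first by rewrite /kerP lin0.
by move=> k x y; rewrite /kerP lf => -> ->; rewrite scaler0 addr0.
Qed.

Lemma rdim_ext A A' B B' d : (forall x, A x <-> A' x) -> (forall x, B x <-> B' x) ->
  rdim A B d -> rdim A' B' d.
Proof.
move=> HA HB [L [sz [iL sL dL]]]; exists L; split => //; split.
- by move=> j Hj; apply/HB/iL.
- move=> b /HB /sL [a [c [Aa E]]]; exists a, c; split => //; exact/HA.
- by move=> c /HA; apply: dL.
Qed.

Lemma spans_weak A A' B B' L : incl A A' -> incl B' B -> spans A B L -> spans A' B' L.
Proof.
move=> iA iB sL b /iB /sL [a [c [Aa E]]]; exists a, c; split => //; exact: iA.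
Qed.

Lemma rdim_tower A B C d1 d2 : subsp A -> subsp B -> incl A B -> incl B C ->
  rdim A B d1 -> rdim B C d2 -> rdim A C (d1 + d2).
Proof.
move=> sA sB iAB iBC [L1 [<- [i1 s1 dd1]]] [L2 [<- [i2 s2 dd2]]].
exists (L1 ++ L2); split; first by rewrite size_cat.
split.
- move=> j; rewrite size_cat nth_cat; case: (ltnP j (size L1)) => Hj Hj'.
    by apply: iBC; apply: i1.
  by apply: i2; rewrite -(ltn_add2l (size L1)) subnKC.
- move=> x /s2 [b [c2 [Bb ->]]].
  have [a [c1 [Aa ->]]] := s1 _ Bb.
  exists a, (fun j => if (j < size L1)%N then c1 j else c2 (j - size L1)%N).
  split => //; rewrite lc_cat -addrA; congr (_ + _); congr (_ + _).
    by apply: lc_ext => j ->.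
  by apply: lc_ext => j _; rewrite ltnNge leq_addr /= addKn.
- move=> c; rewrite lc_cat => HA.
  have HB1 : B (lc L1 c) by apply: lc_in.
  have H2 : forall j, (j < size L2)%N -> c (size L1 + j)%N = 0.
    apply: dd2; have -> : lc L2 (fun j => c (size L1 + j)%N)
       = (lc L1 c + lc L2 (fun j => c (size L1 + j)%N)) - lc L1 c.
      by rewrite addrC addKr.
    by apply: subspB => //; apply: iAB.
  have E2 : lc L2 (fun j => c (size L1 + j)%N) = 0.
    by rewrite (lc_ext (c' := fun=> 0)) ?lc0.
  move: HA; rewrite E2 addr0 => HA j; rewrite size_cat => Hj.
  case: (ltnP j (size L1)) => Hj1; first by apply: dd1.
  by rewrite -(subnKC Hj1); apply: H2; rewrite -(ltn_add2l (size L1)) subnKC.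
Qed.

Lemma rdim_img f A B d : lin f -> subsp A -> subsp B -> incl A B ->
  (forall b, B b -> f b = 0 -> A b) -> rdim A B d -> rdim (img f A) (img f B) d.
Proof.
move=> lf sA sB iAB Hk [L [<- [iL sL dL]]]; exists (map f L); split.
  by rewrite size_map.
split.
- move=> j; rewrite size_map => Hj; rewrite (nth_map 0) //.
  by exists L`_j; split => //; apply: iL.
- move=> y [b [Bb ->]]; have [a [c [Aa ->]]] := sL _ Bb.
  exists (f a), c; split; first by exists a.
  by rewrite linD // lin_lc.
- move=> c [a [Aa]]; rewrite size_map -lin_lc // => E.
  apply: dL; have -> : lc L c = (lc L c - a) + a by rewrite subrK.
  apply: subspD => //; apply: Hk.
    by apply: subspB => //; [apply: lc_in | apply: iAB].
  by rewrite linB // E subrr.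
Qed.

Lemma rdim_preimg f A B d : lin f -> subsp A -> subsp B -> incl A B ->
  (forall b, B b -> f b = 0 -> A b) -> rdim (img f A) (img f B) d -> rdim A B d.
Proof.
move=> lf sA sB iAB Hk [M [<- [iM sM dM]]].
have HF : forall y, exists x, img f B y -> B x /\ y = f x.
  move=> y; case: (classic (img f B y)) => [[x [Bx E]]|N].
    by exists x.
  by exists 0.
pose F y := proj1_sig (constructive_indefinite_description _ (HF y)).
have FP : forall y, img f B y -> B (F y) /\ y = f (F y).
  by move=> y; rewrite /F; case: constructive_indefinite_description.
have sp : spans A B (map F M).
  move=> b Bb; have [a' [c [[a [Aa ->]] E]]] := sM (f b) (ex_intro _ b (conj Bb erefl)).
  have Hm : map f (map F M) = M.
    rewrite -map_comp -[RHS]map_id; apply/eq_in_map => y /(nthP 0) [j Hj <-].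
    by rewrite /= -(proj2 (FP _ (iM j Hj))).
  have Hb : B (lc (map F M) c).
    apply: lc_in => // j; rewrite size_map => Hj; rewrite (nth_map 0) //.
    exact: (proj1 (FP _ (iM j Hj))).
  exists (b - lc (map F M) c), c; split; last by rewrite subrK.
  have -> : b - lc (map F M) c = (b - a - lc (map F M) c) + a.
    by rewrite addrAC subrK.
  apply: subspD => //; apply: Hk.
    by apply: subspB => //; apply: subspB => //; apply: iAB.
  by rewrite !linB // [f (lc _ _)]lin_lc // Hm E [f a + _]addrC addrK subrr.
have [d' Hd'] := rdim_exists sA sB iAB sp.
have := rdim_img lf sA sB iAB Hk Hd'.
move/(rdim_uniq (img_subsp lf sA)) => /(_ (size M)) <- //.
by exists M.
Qed.

Lemma rdim_iso2 Z Kr d : subsp Z -> subsp Kr ->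
  rdim (capP Kr Z) Kr d -> rdim Z (sumP Z Kr) d.
Proof.
move=> sZ sK [L [<- [iL sL dL]]]; exists L; split => //; split.
- move=> j Hj; exists 0, L`_j; split; rewrite ?add0r //; [exact: (subsp0 sZ) | exact: iL].
- move=> x [z [k [Zz Kk ->]]]; have [a [c [[Ka Za] ->]]] := sL _ Kk.
  exists (z + a), c; split; [exact: subspD | by rewrite addrA].
- move=> c HZ; apply: dL; split => //; exact: lc_in.
Qed.

End LinAlg3.
Arguments Z0 {K V} x.
Arguments TT {K V} x.


Section Fred.
Variables (K : fieldType) (V : lmodType K).
Implicit Types (A B C : V -> Prop) (L D : seq V) (c : nat -> K).

Lemma rdim_spans A B d : rdim A B d -> exists L, spans A B L.
Proof. by case=> L [_ [_ sL _]]; exists L. Qed.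

Lemma comp_index (f g : V -> V) (kf cf kg cg : nat) : lin f -> lin g ->
  rdim Z0 (kerP f) kf -> rdim (img f TT) TT cf ->
  rdim Z0 (kerP g) kg -> rdim (img g TT) TT cg ->
  exists k cc, [/\ rdim Z0 (kerP (f \o g)) k, rdim (img (f \o g) TT) TT cc &
     k%:Z - cc%:Z = (kf%:Z - cf%:Z) + (kg%:Z - cg%:Z)].
Proof.
move=> lf lg Hkf Hcf Hkg Hcg.
have lfg : lin (f \o g) by move=> k x y /=; rewrite lg lf.
have sK f' : lin f' -> subsp (kerP f') by move=> ?; apply: ker_subsp.
have sI := cap_subsp (ker_subsp lf) (img_subsp lg (@TT_subsp _ V)).
have sZ0 := @Z0_subsp _ V.
have sIg := img_subsp lg (@TT_subsp _ V).
have sIf := img_subsp lf (@TT_subsp _ V).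
have sIfg := img_subsp lfg (@TT_subsp _ V).
have [Lf sLf] := rdim_spans Hkf.
have [Lcg sLcg] := rdim_spans Hcg.
have Z0I : incl Z0 (capP (kerP f) (img g TT)).
  move=> x ->; split; [exact: lin0 | by exists 0; rewrite lin0].
have [d1 Hd1] : exists d, rdim Z0 (capP (kerP f) (img g TT)) d.
  by apply: (rdim_exists sZ0 sI Z0I); apply: spans_weak sLf => // x [].
have [d2 Hd2] : exists d, rdim (capP (kerP f) (img g TT)) (kerP f) d.
  apply: (rdim_exists sI (ker_subsp lf)); first by move=> x [].
  by apply: spans_weak sLf => // x ->; exact: sI.1.
have Ekf : kf = (d1 + d2)%N.
  apply: (rdim_uniq sZ0 Hkf); apply: rdim_tower Hd1 Hd2 => //; by move=> x [].
have H4 : rdim (kerP g) (kerP (f \o g)) d1.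
  apply: (rdim_preimg lg (ker_subsp lg) (ker_subsp lfg)).
  - by move=> x; rewrite /kerP /= => ->; rewrite lin0.
  - by [].
  - apply: rdim_ext Hd1.
      move=> x; split; first by move=> ->; exists 0; split; rewrite /kerP ?lin0.
      by case=> y [Hy ->].
    move=> x; split; first by case=> Hf [y [_ E]]; exists y; split => //; rewrite /kerP /= -E.
    by case=> y [Hy ->]; split => //; exists y.
have Hk : rdim Z0 (kerP (f \o g)) (kg + d1).
  apply: (rdim_tower sZ0 (ker_subsp lg) _ _ Hkg H4).
  - by move=> x ->; rewrite /kerP lin0.
  - by move=> x; rewrite /kerP /= => ->; rewrite lin0.
have H6 := rdim_iso2 sIg (ker_subsp lf) Hd2.
have sS := sum_subsp sIg (ker_subsp lf).
have [e He] : exists e, rdim (sumP (img g TT) (kerP f)) TT e.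
  apply: (rdim_exists sS (@TT_subsp _ V)) => //.
  apply: spans_weak sLcg => // x Hx; exists x, 0; split => //; last by rewrite addr0.
  by rewrite /kerP lin0.
have Ecg : cg = (d2 + e)%N.
  apply: (rdim_uniq sIg Hcg); apply: rdim_tower H6 He => //.
  by move=> x Hx; exists x, 0; split; rewrite ?addr0 // /kerP lin0.
have H9 : rdim (img (f \o g) TT) (img f TT) e.
  have Hc : forall b, TT b -> f b = 0 -> sumP (img g TT) (kerP f) b.
    move=> b _ Hb; exists 0, b; split; rewrite ?add0r //.
    by exists 0; rewrite lin0.
  have H := rdim_img lf sS (@TT_subsp _ V) (fun _ _ => I) Hc He.
  apply: rdim_ext H => y; split.
  - case=> x [[a [b [[z [_ ->]] Hb ->]]] ->]; exists z; split => //.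
    by rewrite /= linD // Hb addr0.
  - case=> z [_ ->]; exists (g z); split => //; exists (g z), 0.
    by split; rewrite ?addr0 //; [exists z | rewrite /kerP lin0].
  - by case=> x [_ ->]; exists x.
  - by case=> x [_ ->]; exists x.
have Hc : rdim (img (f \o g) TT) TT (e + cf).
  apply: (rdim_tower sIfg sIf _ _ H9 Hcf) => //.
  by move=> y [x [_ ->]]; exists (g x).
exists (kg + d1)%N, (e + cf)%N; split => //.
rewrite Ekf Ecg; lia.
Qed.

Lemma restrict_index (f : V -> V) Z (w kf cf : nat) : lin f -> subsp Z ->
  rdim Z TT w -> rdim Z0 (kerP f) kf -> rdim (img f TT) TT cf ->
  exists k z, [/\ rdim Z0 (capP (kerP f) Z) k, rdim (img f Z) TT z &
    kf%:Z - cf%:Z = k%:Z - z%:Z + w%:Z].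
Proof.
move=> lf sZ Hw Hkf Hcf.
have sZ0 := @Z0_subsp _ V.
have sTT := @TT_subsp _ V.
have sKf := ker_subsp lf.
have sC := cap_subsp sKf sZ.
have sS := sum_subsp sZ sKf.
have sIf := img_subsp lf sTT.
have sIZ := img_subsp lf sZ.
have [Lf sLf] := rdim_spans Hkf.
have [LZ sLZ] := rdim_spans Hw.
have Z0C : incl Z0 (capP (kerP f) Z).
  by move=> x ->; split; [exact: lin0 | exact: (subsp0 sZ)].
have [k Hk] : exists k, rdim Z0 (capP (kerP f) Z) k.
  by apply: (rdim_exists sZ0 sC Z0C); apply: spans_weak sLf => // x [].
have [r Hr] : exists r, rdim (capP (kerP f) Z) (kerP f) r.
  apply: (rdim_exists sC sKf); first by move=> x [].
  by apply: spans_weak sLf => // x ->; exact: sC.1.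
have Ekf : kf = (k + r)%N.
  by apply: (rdim_uniq sZ0 Hkf); apply: (rdim_tower sZ0 sC Z0C _ Hk Hr) => x [].
have H2 := rdim_iso2 sZ sKf Hr.
have ZS : incl Z (sumP Z (kerP f)).
  by move=> x Hx; exists x, 0; split; rewrite ?addr0 // /kerP lin0.
have [s Hs] : exists s, rdim (sumP Z (kerP f)) TT s.
  by apply: (rdim_exists sS sTT) => //; apply: spans_weak sLZ.
have Ew : w = (r + s)%N.
  by apply: (rdim_uniq sZ Hw); apply: (rdim_tower sZ sS ZS _ H2 Hs).
have H3 : rdim (img f Z) (img f TT) s.
  have Hc : forall b, TT b -> f b = 0 -> sumP Z (kerP f) b.
    by move=> b _ Hb; exists 0, b; split; rewrite ?add0r //; exact: (subsp0 sZ).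
  have H := rdim_img lf sS sTT (fun _ _ => I) Hc Hs.
  apply: rdim_ext H => y; split.
  - case=> x [[a [b [Za Hb ->]]] ->]; exists a; split => //.
    by rewrite linD // Hb addr0.
  - by case=> z [Zz ->]; exists z; split => //; exact: ZS.
  - by [].
  - by [].
have Hz : rdim (img f Z) TT (s + cf).
  apply: (rdim_tower sIZ sIf _ _ H3 Hcf) => //.
  by move=> y [x [_ ->]]; exists x.
exists k, (s + cf)%N; split => //.
rewrite Ekf Ew; lia.
Qed.

Lemma pert_index (f g : V -> V) (H : seq V) (kf cf kg cg : nat) : lin f -> lin g ->
  (forall p, exists c, f p - g p = lc H c) ->
  rdim Z0 (kerP f) kf -> rdim (img f TT) TT cf ->
  rdim Z0 (kerP g) kg -> rdim (img g TT) TT cg ->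
  kf%:Z - cf%:Z = kg%:Z - cg%:Z.
Proof.
move=> lf lg HH Hkf Hcf Hkg Hcg.
pose h p := f p - g p.
have lh : lin h by move=> k x y; rewrite /h lf lg scalerBr opprD addrACA.
have sZ0 := @Z0_subsp _ V.
have sTT := @TT_subsp _ V.
have sZ := ker_subsp lh.
have [w Hw0] : exists w, rdim Z0 (img h TT) w.
  have Hi : incl Z0 (img h TT) by move=> x ->; exists 0; split => //; rewrite lin0.
  apply: (@rdim_exists _ _ _ _ H sZ0 (img_subsp lh sTT) Hi).
  by move=> y [x [_ ->]]; have [c Hc] := HH x; exists 0, c; split => //; rewrite add0r.
have Hw : rdim (kerP h) TT w.
  apply: (rdim_preimg lh sZ sTT) => //.
  apply: rdim_ext Hw0 => // x; split.
    by move=> ->; exists 0; split; rewrite /kerP ?lin0.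
  by case=> y [Hy ->].
have [k1 [z1 [Hk1 Hz1 E1]]] := restrict_index lf sZ Hw Hkf Hcf.
have [k2 [z2 [Hk2 Hz2 E2]]] := restrict_index lg sZ Hw Hkg Hcg.
have Efg : forall x, kerP h x -> f x = g x.
  by move=> x; rewrite /kerP /h => /eqP; rewrite subr_eq0 => /eqP.
have Ek : k1 = k2.
  apply: (rdim_uniq sZ0 Hk1); apply: rdim_ext Hk2 => // x; split.
    by case=> Hg Hx; split => //; rewrite /kerP Efg.
  by case=> Hf Hx; split => //; rewrite /kerP -Efg.
have Ez : z1 = z2.
  apply: (rdim_uniq (img_subsp lf sZ) Hz1); apply: rdim_ext Hz2 => // y; split.
    by case=> x [Hx ->]; exists x; rewrite Efg.
  by case=> x [Hx ->]; exists x; rewrite Efg.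
by rewrite E1 E2 Ek Ez.
Qed.

End Fred.

Section Coef.
Variables (K : fieldType) (n : nat).
Local Notation P := (Pn K n).
Implicit Types (p q : P) (m : 'X_{1..n}).

Lemma coef_sum_img (p : P) (g : 'X_{1..n} -> option 'X_{1..n}) k :
  (\sum_(m <- msupp p) p@_m *: (if g m is Some m' then 'X_[m'] else 0))@_k
  = \sum_(m <- msupp p) p@_m * (g m == Some k)%:R.
Proof.
rewrite (big_morph _ (@mcoeffD _ _ k) (@mcoeff0 _ _ k)).
apply: eq_bigr => m _; rewrite mcoeffZ; case: (g m) => [m'|] /=.
  by rewrite mcoeffX.
by rewrite mcoeff0.
Qed.

Lemma sum_msupp_single (p : P) m0 (Q : 'X_{1..n} -> bool) :
  (forall m, Q m = (m == m0)) ->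
  \sum_(m <- msupp p) p@_m * (Q m)%:R = p@_m0.
Proof.
move=> HQ.
case: (boolP (m0 \in msupp p)) => H.
  rewrite (bigD1_seq m0) //= ?msupp_uniq // HQ eqxx mulr1 big1 ?addr0 //.
  by move=> m /negbTE Hm; rewrite HQ Hm mulr0.
rewrite big1_seq; last first.
  move=> m /andP[_ Hm]; rewrite HQ; case: eqP => [E|]; last by rewrite mulr0.
  by subst; rewrite Hm in H.
by move: H; rewrite -mcoeff_eq0 => /eqP ->.
Qed.

Lemma sum_msupp_none (p : P) (Q : 'X_{1..n} -> bool) :
  (forall m, Q m = false) -> \sum_(m <- msupp p) p@_m * (Q m)%:R = 0.
Proof. by move=> HQ; rewrite big1 // => m _; rewrite HQ mulr0. Qed.

Definition proj (S : pred 'X_{1..n}) p : P :=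
  \sum_(m <- msupp p) p@_m *: (if S m then 'X_[m] else 0).

Lemma projE S p m : (proj S p)@_m = if S m then p@_m else 0.
Proof.
have -> : proj S p = \sum_(m <- msupp p) p@_m *:
    (if (if S m then Some m else None) is Some m' then 'X_[m'] else 0).
  by apply: eq_bigr => m' _; case: (S m').
rewrite coef_sum_img; case: (boolP (S m)) => Hm.
  apply: sum_msupp_single => m'; case: (boolP (S m')) => H' //=.
  by apply/esym/eqP => E; rewrite E Hm in H'.
apply: sum_msupp_none => m'; case: (boolP (S m')) => H' //=.
by apply/eqP => -[E]; rewrite E (negbTE Hm) in H'.
Qed.

Lemma opyE (i : 'I_n) p m : (opy i p)@_m = p@_(mnm_add m (mnm1 i)).
Proof.
rewrite /opy.
have -> : \sum_(m0 <- msupp p) p@_m0 *: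
   (if (0 < m0 i)%N then 'X_[mnm_sub m0 (mnm1 i)] else 0) =
   \sum_(m0 <- msupp p) p@_m0 *:
   (if (if (0 < m0 i)%N then Some (mnm_sub m0 (mnm1 i)) else None) is Some m'
    then 'X_[m'] else 0).
  by apply: eq_bigr => m' _; case: (0 < m' i)%N.
rewrite coef_sum_img; apply: sum_msupp_single => m'.
case: (ltnP 0 (m' i)) => H /=.
  rewrite (inj_eq (@Some_inj _)); apply/eqP/eqP => [<-|->].
    by apply/mnmP => j; rewrite !mnmE; case: (i =P j) => [<-|_] /=; [rewrite subnK | rewrite subn0 addn0].
  by apply/mnmP => j; rewrite !mnmE addnK.
apply/esym/eqP => E; subst; move: H; rewrite !mnmE eqxx addn1.
by [].
Qed.

Lemma opxE (i : 'I_n) p m :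
  (opx i p)@_m = if (0 < m i)%N then p@_(mnm_sub m (mnm1 i)) else 0.
Proof.
rewrite /opx mulrC; case: ltnP => H.
  have -> : m = mnm_add (mnm1 i) (mnm_sub m (mnm1 i)).
    by apply/mnmP => j; rewrite !mnmE; case: (i =P j) => [<-|_] /=; [rewrite subnKC | rewrite subn0 add0n].
  rewrite mcoeffMX; congr (p@__); apply/mnmP => j; rewrite !mnmE.
  by rewrite addKn.
apply/eqP; rewrite mcoeff_eq0 (perm_mem (msuppMX _ _)); apply/mapP => -[m' _ E].
by move: H; rewrite E !mnmE eqxx.
Qed.

End Coef.

Section Ops.
Variables (K : fieldType) (n : nat).
Local Notation P := (Pn K n).
Implicit Types (p q : P) (m : 'X_{1..n}) (S T : pred 'X_{1..n}).

Definition supp S p := forall m, ~~ S m -> p@_m = 0.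

Lemma lin_opx (i : 'I_n) : lin (opx (K:=K) i).
Proof. by move=> k x y; rewrite /opx mulrDr scalerAr. Qed.
Lemma lin_opy (i : 'I_n) : lin (opy (K:=K) i).
Proof. by move=> k x y; apply/mpolyP => m; rewrite !(opyE, mcoeffD, mcoeffZ). Qed.
Lemma lin_proj S : lin (proj (K:=K) S).
Proof.
by move=> k x y; apply/mpolyP => m; rewrite !(projE, mcoeffD, mcoeffZ); case: (S m); rewrite ?mulr0 ?addr0.
Qed.
Lemma lin_inS (f : op K n) : inS f -> lin f.
Proof.
elim=> {f} [i|i||f g _ lf _ lg|c f _ lf|f g _ lf _ lg].
- exact: lin_opx.
- exact: lin_opy.
- by [].
- move=> k x y; rewrite /opadd lf lg scalerDr.
  by rewrite -!addrA; congr (_ + _); rewrite addrCA.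
- by move=> k x y; rewrite /opscale lf scalerDr !scalerA mulrC.
- by move=> k x y; rewrite /opmul lg lf.
Qed.

Lemma proj_supp S p : supp S p -> proj S p = p.
Proof. by move=> H; apply/mpolyP => m; rewrite projE; case: (boolP (S m)) => // /H ->. Qed.
Lemma supp_proj S p : supp S (proj S p).
Proof. by move=> m Hm; rewrite projE (negbTE Hm). Qed.
Lemma proj_proj S T p : proj S (proj T p) = proj [pred m | S m && T m] p.
Proof. by apply/mpolyP => m; rewrite !projE /=; case: (S m); case: (T m). Qed.
Lemma proj_split S p : p = proj S p + proj (predC S) p.
Proof. by apply/mpolyP => m; rewrite mcoeffD !projE /=; case: (S m); rewrite ?addr0 ?add0r. Qed.
Lemma proj_ext S T p : S =1 T -> proj S p = proj T p.
Proof. by move=> H; apply/mpolyP => m; rewrite !projE H. Qed.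
Lemma proj_none S p : (forall m, S m = false) -> proj S p = 0.
Proof. by move=> H; apply/mpolyP => m; rewrite projE H mcoeff0. Qed.
Lemma supp_mono S T p : (forall m, S m -> T m) -> supp S p -> supp T p.
Proof. by move=> HST H m Hm; apply: H; apply/negP => /HST; apply/negP. Qed.
Lemma supp0 S : supp S (0 : P). Proof. by move=> m _; rewrite mcoeff0. Qed.
Lemma suppD S p q : supp S p -> supp S q -> supp S (p + q).
Proof. by move=> Hp Hq m Hm; rewrite mcoeffD Hp ?Hq ?addr0. Qed.
Lemma suppZ S k p : supp S p -> supp S (k *: p).
Proof. by move=> Hp m Hm; rewrite mcoeffZ Hp ?mulr0. Qed.
Lemma suppN S p : supp S p -> supp S (- p).
Proof. by move=> Hp m Hm; rewrite mcoeffN Hp ?oppr0. Qed.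

Definition up (j : 'I_n) (d : nat) (f : op K n) :=
  forall M p, supp (fun m => m j < M)%N p -> supp (fun m => m j < M + d)%N (f p).
Definition down (j : 'I_n) (d : nat) (f : op K n) :=
  forall M p, supp (fun m => M + d <= m j)%N p -> supp (fun m => M <= m j)%N (f p).

Lemma up_mono j d d' f : (d <= d')%N -> up j d f -> up j d' f.
Proof.
move=> Hd H M p Hp; apply: supp_mono (H M p Hp) => m /= Hm.
by apply: leq_trans Hm _; rewrite leq_add2l.
Qed.
Lemma down_mono j d d' f : (d <= d')%N -> down j d f -> down j d' f.
Proof.
move=> Hd H M p Hp; apply: H; apply: supp_mono Hp => m /= Hm.
by apply: leq_trans Hm; rewrite leq_add2l.
Qed.

Lemma updown_inS j f : inS f -> exists d, up j d f /\ down j d f.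
Proof.
elim=> {f} [i|i||f g _ [d1 [u1 d1']] _ [d2 [u2 d2']]|c f _ [d1 [u1 d1']]|f g _ [d1 [u1 d1']] _ [d2 [u2 d2']]].
- exists 1%N; split => M p Hp m /= Hm; rewrite opxE; case: ifP => // H0;
    apply: Hp; move: Hm H0; rewrite /= !mnmE;
    (case: (i =P j) => [E|NE] /=; [subst|]; lia).
- exists 1%N; split => M p Hp m /= Hm; rewrite opyE;
    apply: Hp; move: Hm; rewrite /= !mnmE;
    (case: (i =P j) => [E|NE] /=; [subst|]; lia).
- by exists 0%N; split => M p; rewrite ?addn0.
- exists (maxn d1 d2); split => M p Hp.
    by apply: suppD; [apply: (up_mono (leq_maxl d1 d2) u1) | apply: (up_mono (leq_maxr d1 d2) u2)].
  by apply: suppD; [apply: (down_mono (leq_maxl d1 d2) d1') | apply: (down_mono (leq_maxr d1 d2) d2')].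
- by exists d1; split => M p Hp; apply: suppZ; [apply: u1 | apply: d1'].
- exists (d2 + d1)%N; split => M p Hp.
    by rewrite addnA; apply: u1; apply: u2.
  rewrite /opmul; apply: d1'; apply: d2'; by rewrite -addnA [(d1 + d2)%N]addnC.
Qed.

End Ops.

Section Ideal.
Variables (K : fieldType) (n : nat).
Local Notation P := (Pn K n).
Implicit Types (p q : P) (m : 'X_{1..n}) (S T : pred 'X_{1..n}).

Lemma opexpS (f : op K n) k p : opexp f k.+1 p = f (opexp f k p).
Proof. by []. Qed.
Lemma opexpSr (f : op K n) k p : opexp f k.+1 p = opexp f k (f p).
Proof. by elim: k => [|k IH] //; rewrite opexpS IH. Qed.
Lemma inS_exp (f : op K n) k : inS f -> inS (opexp f k).
Proof.
move=> Hf; elim: k => [|k IH]; first exact: inS_1.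
by apply: inS_mul.
Qed.

Lemma up_comp j d1 d2 (f g : op K n) : up j d1 f -> up j d2 g -> up j (d2 + d1) (opmul f g).
Proof. by move=> u1 u2 M p Hp; rewrite addnA; apply: u1; apply: u2. Qed.
Lemma down_comp j d1 d2 (f g : op K n) : down j d1 f -> down j d2 g -> down j (d2 + d1) (opmul f g).
Proof. by move=> u1 u2 M p Hp; rewrite /opmul; apply: u1; apply: u2; rewrite -addnA [(d1 + d2)%N]addnC. Qed.

Lemma up_xexp (j : 'I_n) k : up j k (opexp (opx (K:=K) j) k).
Proof.
elim: k => [|k IH]; first by move=> M p; rewrite addn0.
have u : up j 1 (opx (K:=K) j).
  move=> M p Hp m /= Hm; rewrite opxE; case: ifP => // H0;
    apply: Hp; move: Hm H0; rewrite /= !mnmE eqxx /=; lia.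
move: (up_comp u IH); rewrite addn1; apply.
Qed.

Lemma down_yexp (j : 'I_n) k : down j k (opexp (opy (K:=K) j) k).
Proof.
elim: k => [|k IH]; first by move=> M p; rewrite addn0.
have u : down j 1 (opy (K:=K) j).
  move=> M p Hp m /= Hm; rewrite opyE;
    apply: Hp; move: Hm; rewrite /= !mnmE eqxx /=; lia.
move: (down_comp u IH); rewrite addn1; apply.
Qed.

Lemma xyE (j : 'I_n) q m :
  (opx j (opy j q))@_m = if (0 < m j)%N then q@_m else (0 : K).
Proof.
rewrite opxE opyE; case: ifP => // H; congr (q@__).
by apply/mnmP => i; rewrite !mnmE; case: (j =P i) => [<-|_] /=; lia.
Qed.

Definition bnd (j : 'I_n) N (a : op K n) :=
  (forall p, supp (fun m => m j < N)%N (a p)) /\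
  (forall p, supp (fun m => N <= m j)%N p -> a p = 0).

Lemma bnd_mono j N N' a : (N <= N')%N -> bnd j N a -> bnd j N' a.
Proof.
move=> HN [H1 H2]; split => p.
  by apply: supp_mono (H1 p) => m Hm; apply: leq_trans Hm HN.
by move=> Hp; apply: H2; apply: supp_mono Hp => m Hm; apply: leq_trans HN Hm.
Qed.

Lemma lin_pgen (j : 'I_n) k l : lin (pgen (K:=K) j k l).
Proof.
have lx := lin_inS (inS_exp k (inS_x K j)).
have ly := lin_inS (inS_exp l (inS_y K j)).
have lx' := lin_inS (inS_exp k.+1 (inS_x K j)).
have ly' := lin_inS (inS_exp l.+1 (inS_y K j)).
move=> c x y; rewrite /pgen /opadd /opopp /opmul ly lx ly' lx'.
by rewrite scalerDr scalerN opprD !addrA; congr (_ + _); rewrite addrAC.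
Qed.

Lemma lin_inp j (a : op K n) : inp j a -> lin a.
Proof.
elim=> {a} [k l||a b _ la _ lb|s a Hs _ la|a s Hs _ la].
- exact: lin_pgen.
- by move=> k x y; rewrite /op0 scaler0 addr0.
- move=> k x y; rewrite /opadd la lb scalerDr.
  by rewrite -!addrA; congr (_ + _); rewrite addrCA.
- by move=> k x y; rewrite /opmul la (lin_inS Hs).
- by move=> k x y; rewrite /opmul (lin_inS Hs) la.
Qed.

Lemma inp_bnd j (a : op K n) : inp j a -> exists N, bnd j N a.
Proof.
elim=> {a} [k l||a b _ [N1 B1] _ [N2 B2]|s a Hs _ [N B]|a s Hs _ [N B]].
- exists (k + l).+1.
  have lx := lin_inS (inS_exp k (inS_x K j)).
  have E : forall p, pgen j k l p =
     opexp (opx j) k (opexp (opy j) l p - opx j (opy j (opexp (opy j) l p))).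
    by move=> p; rewrite /pgen /opadd /opopp /opmul opexpSr opexpS linB.
  split => p.
    rewrite E; apply: (@supp_mono _ _ (fun m => (m j < 1 + k)%N)).
      by move=> m /= Hm; apply: leq_trans Hm _; rewrite add1n ltnS leq_addr.
    apply: (@up_xexp j k 1) => m /=; rewrite -leqNgt => Hm.
    by rewrite mcoeffB xyE Hm subrr.
  move=> Hp; rewrite E.
  have Hq := @down_yexp j l 1 p.
  have -> : opexp (opy j) l p - opx j (opy j (opexp (opy j) l p)) = 0.
    apply/mpolyP => m; rewrite mcoeffB xyE mcoeff0; case: ifP => H.
      by rewrite subrr.
    rewrite subr0; apply: Hq; last by rewrite /= H.
    apply: supp_mono Hp => m' /=; apply: leq_trans; rewrite add1n ltnS.
    by rewrite leq_addl.
  exact: lin0 lx.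
- by exists 0%N; split => p // m; rewrite /op0 mcoeff0.
- exists (maxn N1 N2).
  have [H11 H12] := bnd_mono (leq_maxl N1 N2) B1.
  have [H21 H22] := bnd_mono (leq_maxr N1 N2) B2.
  by split => p; [apply: suppD | move=> Hp; rewrite /opadd H12 // H22 // addr0].
- have [d [u _]] := updown_inS j Hs.
  exists (N + d)%N; have [H1 H2] := B; split => p.
    by apply: u; apply: H1.
  move=> Hp; rewrite /opmul H2; first exact: lin0 (lin_inS Hs).
  by apply: supp_mono Hp => m Hm; apply: leq_trans Hm; rewrite leq_addr.
- have [d [_ dn]] := updown_inS j Hs.
  exists (N + d)%N; have [H1 H2] := B; split => p.
    by apply: supp_mono (H1 _) => m Hm; apply: leq_trans Hm _; rewrite leq_addr.
  by move=> Hp; rewrite /opmul H2 //; apply: dn.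
Qed.

End Ideal.

Lemma common_bound (I : finType) (Q : I -> nat -> Prop) :
  (forall x N N', (N <= N')%N -> Q x N -> Q x N') ->
  (forall x, exists N, Q x N) -> exists N, forall x, Q x N.
Proof.
move=> Hm HQ.
suff : forall s : seq I, exists N, forall x, x \in s -> Q x N.
  by case/(_ (enum I)) => N HN; exists N => x; apply: HN; rewrite mem_enum.
elim=> [|y s [N HN]]; first by exists 0%N.
have [N' HN'] := HQ y; exists (maxn N N') => x; rewrite inE => /orP [/eqP ->|Hx].
  by apply: Hm HN'; apply: leq_maxr.
by apply: Hm (HN x Hx); apply: leq_maxl.
Qed.

Section Bridge.
Variables (K : fieldType) (n : nat).
Local Notation P := (Pn K n).

Lemma lincombE (B : seq P) c : lincomb B c = lc B c.
Proof. by []. Qed.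

Lemma ker_basis_of (f : op K n) B : basis Z0 (kerP f) B -> ker_basis f B.
Proof.
case=> iB sB dB; split; [|split].
- by move=> b /(nthP 0) [j Hj <-]; apply: iB.
- by move=> p /sB [x [c [-> ->]]]; exists c; rewrite add0r.
- by move=> c Hc; apply: dB.
Qed.

Lemma basis_of_ker (f : op K n) B : ker_basis f B -> basis Z0 (kerP f) B.
Proof.
case=> iB [sB dB]; split.
- by move=> j Hj; apply: iB; apply: mem_nth.
- by move=> p /sB [c ->]; exists 0, c; rewrite add0r.
- by move=> c Hc; apply: dB.
Qed.

Lemma coker_basis_of (f : op K n) C : basis (img f TT) TT C -> coker_basis f C.
Proof.
case=> _ sC dC; split.
- by move=> p; have [x [c [[q [_ ->]] ->]]] := sC p I; exists q, c.
- by move=> c [q Hq]; apply: dC; exists q.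
Qed.

Lemma basis_of_coker (f : op K n) C : coker_basis f C -> basis (img f TT) TT C.
Proof.
case=> sC dC; split => //.
- by move=> p _; have [q [c ->]] := sC p; exists (f q), c; split => //; exists q.
- by move=> c [q [_ Hq]]; apply: dC; exists q.
Qed.

Lemma dim_kerE (f : op K n) d : rdim Z0 (kerP f) d -> dim_ker f = d.
Proof.
move=> H; rewrite /dim_ker.
have Hex : exists d, exists B, size B = d /\ ker_basis f B.
  by case: H => B [_ bB]; exists (size B), B; split => //; apply: ker_basis_of.
case: (epsilon_spec (inhabits 0%N) _ Hex) => B [E kB]; rewrite -E.
apply: (rdim_uniq (@Z0_subsp _ _)) H; exists B; split => //; exact: basis_of_ker.
Qed.

Lemma dim_cokerE (f : op K n) d : lin f -> rdim (img f TT) TT d -> dim_coker f = d.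
Proof.
move=> lf H; rewrite /dim_coker.
have Hex : exists d, exists C, size C = d /\ coker_basis f C.
  by case: H => C [_ bC]; exists (size C), C; split => //; apply: coker_basis_of.
case: (epsilon_spec (inhabits 0%N) _ Hex) => C [E kC]; rewrite -E.
apply: (rdim_uniq (img_subsp lf (@TT_subsp _ _))) H; exists C; split => //; exact: basis_of_coker.
Qed.

Lemma fd_ker_of (f : op K n) d : rdim Z0 (kerP f) d -> fd_ker f.
Proof.
case=> B [_ bB]; have [iB [sB _]] := ker_basis_of bB; by exists B.
Qed.

Lemma fd_coker_of (f : op K n) d : rdim (img f TT) TT d -> fd_coker f.
Proof. by case=> C [_ bC]; have [sC _] := coker_basis_of bC; exists C. Qed.

End Bridge.

Section Main.
Variables (K : fieldType) (n : nat) (N : nat).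
Local Notation P := (Pn K n).
Variable a : 'I_n -> op K n.
Hypothesis Hlin : forall i, lin (a i).
Hypothesis Hbnd : forall i j, j != i -> bnd j N (a i).

Definition Ri (i : 'I_n) : pred 'X_{1..n} := [pred m : 'X_{1..n} | [forall j, (j != i) ==> (m j < N)%N]].
Definition Box : pred 'X_{1..n} := [pred m : 'X_{1..n} | [forall j, (m j < N)%N]].

Lemma supp_a i p : supp (Ri i) (a i p).
Proof.
move=> m; rewrite /Ri /= negb_forall => /existsP [j].
rewrite negb_imply -leqNgt => /andP [Hj Hm].
by have [H1 _] := Hbnd Hj; apply: H1; rewrite -leqNgt.
Qed.

Lemma a_proj1 i j p : j != i -> a i p = a i (proj (fun m => m j < N)%N p).
Proof.
move=> Hj; rewrite {1}(proj_split (fun m => m j < N)%N p) linD //.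
have [_ H2] := Hbnd Hj; rewrite [a i (proj (predC _) _)]H2 ?addr0 //.
by move=> m Hm; rewrite projE /= -leqNgt (negbTE Hm).
Qed.

Lemma a_proj i p : a i p = a i (proj (Ri i) p).
Proof.
suff H : forall js : seq 'I_n, all (fun j => j != i) js ->
   a i p = a i (proj [pred m : 'X_{1..n} | all (fun j => m j < N)%N js] p).
  rewrite (H [seq j <- enum 'I_n | j != i]); last by rewrite all_filter; apply/allP => j _; apply/implyP.
  congr (a i _); apply: proj_ext => m /=; rewrite all_filter; apply/allP/forallP.
    by move=> Hm j; apply: Hm; rewrite mem_enum.
  by move=> Hm j _; apply: Hm.
elim=> [|j js IH] /=.
  by move=> _; congr (a i _); apply/esym/proj_supp.
case/andP => Hj Hjs; rewrite IH // (a_proj1 _ Hj) proj_proj.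
by congr (a i _); apply: proj_ext.
Qed.

Lemma RiRk i k : i != k -> forall m, (Ri i m && Ri k m) = Box m.
Proof.
move=> Hik m; rewrite /Ri /Box /=; apply/andP/forallP.
  case=> /forallP H1 /forallP H2 j; case: (j =P i) => [->|/eqP Hji].
    by have := H2 i; rewrite Hik.
  by have := H1 j; rewrite Hji.
by move=> H; split; apply/forallP => j; apply/implyP => _; apply: H.
Qed.

Lemma a_Box i k p : i != k -> a i (a k p) = a i (proj Box (a k p)).
Proof.
move=> Hik; rewrite a_proj -{1}(proj_supp (@supp_a k p)) proj_proj.
by congr (a i _); apply: proj_ext => m /=; rewrite RiRk.
Qed.

Definition BL : seq 'X_{1..n} := [seq val m | m <- enum {: 'X_{1..n < (n * N).+1}}].
Definition XL : seq P := [seq 'X_[m] | m <- BL].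

Lemma BL_uniq : uniq BL.
Proof. by rewrite map_inj_uniq ?enum_uniq //; apply: val_inj. Qed.

Lemma Box_BL m : Box m -> m \in BL.
Proof.
move=> /forallP Hm.
have Hd : (mdeg m < (n * N).+1)%N.
  rewrite ltnS mdegE; apply: (@leq_trans (\sum_(j < n) N)).
    by apply: leq_sum => j _; apply: ltnW.
  by rewrite sum_nat_const card_ord.
by apply/mapP; exists (BMultinom Hd); rewrite ?mem_enum.
Qed.

Lemma proj_Box_lc q : exists c, proj Box q = lc XL c.
Proof.
exists (fun j => if Box ((nth (@mnm0 n) BL j)) then q@_((nth (@mnm0 n) BL j)) else 0).
have -> : lc XL (fun j => if Box ((nth (@mnm0 n) BL j)) then q@_((nth (@mnm0 n) BL j)) else 0) =
    \sum_(m <- BL) (if Box m then q@_m else 0) *: 'X_[m].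
  rewrite /lc size_map (big_nth (@mnm0 n)) big_mkord; apply: eq_bigr => j _.
  by rewrite (nth_map (@mnm0 n)).
apply/mpolyP => k; rewrite projE (big_morph _ (@mcoeffD _ _ k) (@mcoeff0 _ _ k)).
under eq_bigr => m _ do rewrite mcoeffZ mcoeffX.
case: (boolP (k \in BL)) => Hk.
  rewrite (bigD1_seq k) //= ?BL_uniq // eqxx mulr1 big1 ?addr0 //.
  by move=> m /negbTE Hm; rewrite Hm mulr0.
rewrite big1_seq; last first.
  move=> m /andP [_ Hm]; case: eqP => [E|]; last by rewrite mulr0.
  by subst; rewrite Hm in Hk.
by case: ifP => // /Box_BL; rewrite (negbTE Hk).
Qed.


Definition spanned (L : seq P) (x : P) := exists c, x = lc L c.

Lemma spanned_add L1 L2 x y : spanned L1 x -> spanned L2 y -> spanned (L1 ++ L2) (x + y).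
Proof.
move=> [c1 ->] [c2 ->].
exists (fun j => if (j < size L1)%N then c1 j else c2 (j - size L1)%N).
rewrite lc_cat; congr (_ + _); first by apply: lc_ext => j ->.
by apply: lc_ext => j _; rewrite ltnNge leq_addr /= addKn.
Qed.
Lemma spanned0 L : spanned L 0. Proof. by exists (fun _ => 0); rewrite lc0. Qed.
Lemma spanned_sum L (I : Type) (r : seq I) (F : I -> P) :
  (forall i, spanned L (F i)) -> spanned L (\sum_(i <- r) F i).
Proof.
move=> HF; elim: r => [|x r [c IH]]; first by rewrite big_nil; apply: spanned0.
have [c' E] := HF x; rewrite big_cons E IH lcD; by eexists.
Qed.
Lemma spanned_lin (f : op K n) L x : lin f -> spanned L x -> spanned (map f L) (f x).
Proof. by move=> lf [c ->]; exists c; rewrite lin_lc. Qed.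
Lemma spanned_N L x : spanned L x -> spanned L (- x).
Proof. by move=> [c ->]; exists (fun j => - c j); rewrite lcN. Qed.

Variable G : op K n.
Hypothesis lG : lin G.
Hypothesis HG1 : forall p, one_plus_sum a (G p) = p.
Hypothesis HG2 : forall p, G (one_plus_sum a p) = p.

Definition T i : op K n := opadd (@op1 K n) (a i).

Lemma lin_T i : lin (T i).
Proof.
move=> k x y; rewrite /T /opadd /op1 Hlin scalerDr.
by rewrite -!addrA; congr (_ + _); rewrite addrCA.
Qed.

Lemma lin_u : lin (one_plus_sum a).
Proof.
move=> k x y; rewrite /one_plus_sum.
have -> : \sum_(i < n) a i (k *: x + y) = k *: \sum_(i < n) a i x + \sum_(i < n) a i y.
  by rewrite scaler_sumr -big_split; apply: eq_bigr => i _; rewrite Hlin.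
by rewrite scalerDr -!addrA; congr (_ + _); rewrite addrCA.
Qed.

Lemma u_split i p : one_plus_sum a p = T i p + \sum_(k < n | k != i) a k p.
Proof. by rewrite /one_plus_sum (bigD1 i) //= /T /opadd /op1 addrA. Qed.

Lemma ker_span i : spans Z0 (kerP (T i))
   (map (fun x => G (\sum_(k < n | k != i) a k x)) XL).
Proof.
move=> v Hv.
have Ev : v = - a i v by apply/eqP; rewrite -addr_eq0; apply/eqP; exact: Hv.
have Sv : proj (Ri i) v = v by apply: proj_supp; rewrite Ev; apply: suppN; apply: supp_a.
have Hk : forall k, k != i -> a k v = a k (proj Box v).
  move=> k Hk; rewrite a_proj -{1}Sv proj_proj; congr (a k _).
  by apply: proj_ext => m /=; rewrite RiRk // eq_sym.
have [c Hc] := proj_Box_lc v.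
pose h x := G (\sum_(k < n | k != i) a k x).
have lh : lin h.
  move=> k x y; rewrite /h -lG; congr (G _).
  by rewrite scaler_sumr -big_split; apply: eq_bigr => j _; rewrite Hlin.
exists 0, c; split => //; rewrite add0r -(lin_lc lh) -Hc.
rewrite /h -{1}(HG2 v) (u_split i) Hv add0r; congr (G _).
by apply: eq_bigr => k Hki; apply: Hk.
Qed.

Lemma coker_span i : spans (img (T i) TT) TT XL.
Proof.
move=> p _; set w := G p.
pose y := \sum_(k < n | k != i) proj [pred m | Ri k m && ~~ Box m] (a k w).
have Ay : a i y = 0.
  rewrite /y (lin_sum (Hlin i)) big1 // => k Hk.
  rewrite a_proj proj_proj proj_none ?(lin0 (Hlin i)) // => m /=.
  by rewrite andbA RiRk ?(eq_sym i) // andbN.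
have Ty : T i y = y by rewrite /T /opadd /op1 Ay addr0.
have [c Hc] := proj_Box_lc (\sum_(k < n | k != i) a k w).
exists (T i (w + y)), c; split; first by exists (w + y).
rewrite -Hc linD ?Ty; last exact: lin_T.
rewrite -{1}(HG1 p) -/w (u_split i) -[RHS]addrA; congr (_ + _).
rewrite /y (lin_sum (lin_proj Box)) -big_split; apply: eq_bigr => k Hk.
rewrite {1}(proj_split Box (a k w)) addrC; congr (_ + _).
apply/mpolyP => m; rewrite !projE /=; case: (boolP (Box m)) => Hb //=; rewrite ?andbF ?andbT //.
by case: (boolP (Ri k m)) => // Hr; rewrite supp_a.
Qed.


Lemma zmod_id (q A B S S' p : P) :
  (q + A) - (p + (B + S)) = (q - (p + S)) + ((A - (B + S')) + S').
Proof.
have -> : A - (B + S') + S' = A - B by rewrite opprD addrA addrNK.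
rewrite !opprD !addrA.
by rewrite [LHS](ACl (1*3*5*2*4)).
Qed.

Lemma spanned_sumP L (I : Type) (r : seq I) (Q : pred I) (F : I -> P) :
  (forall i, Q i -> spanned L (F i)) -> spanned L (\sum_(i <- r | Q i) F i).
Proof.
move=> HF; elim: r => [|x r [c IH]]; first by rewrite big_nil; apply: spanned0.
rewrite big_cons; case: ifP => Hx; last by exists c.
have [c' E] := HF x Hx; rewrite E IH lcD; by eexists.
Qed.

Fixpoint prodT (s : seq 'I_n) : op K n :=
  if s is i :: s' then opmul (T i) (prodT s') else @op1 K n.

Lemma lin_prodT s : lin (prodT s).
Proof.
elim: s => [|i s IH] /=; first by [].
by move=> k x y; rewrite /opmul IH lin_T.
Qed.

Lemma prodT_diff s : uniq s ->
  exists L, forall p, spanned L (prodT s p - (p + \sum_(i <- s) a i p)).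
Proof.
elim: s => [|i s IH] /=.
  by move=> _; exists [::] => p; rewrite big_nil addr0 /op1 subrr; exact: spanned0.
case/andP => Hi Hs; have [L HL] := IH Hs.
exists (L ++ (map (a i) L ++ map (a i) XL)) => p.
set q := prodT s p.
have E : opmul (T i) (prodT s) p - (p + \sum_(k <- i :: s) a k p)
   = (q - (p + \sum_(k <- s) a k p)) +
     (a i (q - (p + \sum_(k <- s) a k p)) + \sum_(k <- s) a i (a k p)).
  rewrite /opmul /T /opadd /op1 -/q big_cons.
  rewrite (linB (Hlin i)) (linD (Hlin i)) (lin_sum (Hlin i)).
  exact: zmod_id.
rewrite E; apply: spanned_add (HL p) _; apply: spanned_add.
  by apply: spanned_lin (HL p).
rewrite big_seq; apply: spanned_sumP => k Hk.
have Hik : i != k by apply/eqP => E'; rewrite E' Hk in Hi.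
rewrite a_Box //; have [c ->] := proj_Box_lc (a k p).
by apply: spanned_lin => //; exists c.
Qed.

Lemma u_rdim_ker : rdim Z0 (kerP (one_plus_sum a)) 0.
Proof.
exists [::]; split => //; split => //.
move=> x Hx; exists 0, (fun _ => 0); split => //.
by rewrite lc_nil addr0 -(HG2 x) Hx (lin0 lG).
Qed.

Lemma u_rdim_coker : rdim (img (one_plus_sum a) TT) TT 0.
Proof.
exists [::]; split => //; split => //.
  move=> p _; exists p, (fun _ => 0); split; last by rewrite lc_nil addr0.
  by exists (G p); rewrite HG1.
Qed.

Lemma T_fred i : rdim Z0 (kerP (T i)) (dim_ker (T i)) /\ rdim (img (T i) TT) TT (dim_coker (T i)).
Proof.
have Hincl : incl Z0 (kerP (T i)) by move=> x ->; exact: (lin0 (lin_T i)).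
have [k Hk] := rdim_exists (@Z0_subsp _ _) (ker_subsp (lin_T i)) Hincl (@ker_span i).
have [c Hc] := rdim_exists (img_subsp (lin_T i) (@TT_subsp _ _)) (@TT_subsp _ _)
   (fun _ _ => I) (@coker_span i).
by rewrite (dim_kerE Hk) (dim_cokerE (lin_T i) Hc).
Qed.

Lemma prodT_index s : exists k c, [/\ rdim Z0 (kerP (prodT s)) k,
   rdim (img (prodT s) TT) TT c &
   k%:Z - c%:Z = \sum_(i <- s) ((dim_ker (T i))%:Z - (dim_coker (T i))%:Z)].
Proof.
elim: s => [|i s [k [c [Hk Hc E]]]] /=.
  exists 0%N, 0%N; rewrite big_nil; split => //.
    exists [::]; split => //; split => //.
    by move=> x Hx; exists 0, (fun _ => 0); split => //; rewrite lc_nil addr0.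
  exists [::]; split => //; split => //.
  by move=> p _; exists p, (fun _ => 0); split; [exists p | rewrite lc_nil addr0].
have [Hk1 Hc1] := T_fred i.
have [k' [c' [Hk' Hc' E']]] := comp_index (lin_T i) (lin_prodT s) Hk1 Hc1 Hk Hc.
by exists k', c'; split => //; rewrite E' E big_cons.
Qed.

Lemma sum_enum (R : zmodType) (F : 'I_n -> R) : \sum_(i <- enum 'I_n) F i = \sum_(i < n) F i.
Proof. by rewrite big_enum. Qed.

Lemma sum_index : \sum_(i < n) ((dim_ker (T i))%:Z - (dim_coker (T i))%:Z) = 0.
Proof.
have [k [c [Hk Hc E]]] := prodT_index (enum 'I_n).
have [L HL] := prodT_diff (enum_uniq 'I_n).
have Hd : forall p, exists c0, prodT (enum 'I_n) p - one_plus_sum a p = lc L c0.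
  by move=> p; have [c' Hc'] := HL p; exists c'; rewrite -Hc' /one_plus_sum sum_enum.
have := pert_index (lin_prodT (enum 'I_n)) lin_u Hd Hk Hc u_rdim_ker u_rdim_coker.
by rewrite -sum_enum -E subrr.
Qed.

End Main.


Section Part2.
Variables (K : fieldType) (n N : nat) (a a' : 'I_n -> op K n).
Local Notation P := (Pn K n).
Hypothesis Hlin : forall i, lin (a i).
Hypothesis Hlin' : forall i, lin (a' i).
Hypothesis Hbnd : forall i j, j != i -> bnd j N (a i).
Hypothesis Hbnd' : forall i j, j != i -> bnd j N (a' i).
Variable G : op K n.
Hypothesis lG : lin G.
Hypothesis HG1 : forall p, one_plus_sum a (G p) = p.
Hypothesis HG2 : forall p, G (one_plus_sum a p) = p.
Hypothesis Heq : forall p, one_plus_sum a p = one_plus_sum a' p.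

Lemma HG1' p : one_plus_sum a' (G p) = p. Proof. by rewrite -Heq HG1. Qed.
Lemma HG2' p : G (one_plus_sum a' p) = p. Proof. by rewrite -Heq HG2. Qed.

Lemma diff_supp i p : supp (Box N) (a i p - a' i p).
Proof.
have Hs : \sum_(k < n) a k p = \sum_(k < n) a' k p.
  by have := Heq p; rewrite /one_plus_sum => /addrI.
move=> m Hm; case: (boolP (Ri N i m)) => Hr; last first.
  by rewrite mcoeffB (supp_a Hbnd) // (supp_a Hbnd') // subrr.
have E : a i p - a' i p = \sum_(k < n | k != i) (a' k p - a k p).
  move: Hs; rewrite (bigD1 i) //= [in X in _ = X -> _](bigD1 i) //= => Hs.
  rewrite sumrB; apply/eqP; rewrite subr_eq addrC addrA -subr_eq opprK addrC Hs.
  by rewrite addrC.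
rewrite E (big_morph _ (@mcoeffD _ _ m) (@mcoeff0 _ _ m)) big1 // => k Hk.
have Hrk : ~~ Ri N k m.
  apply/negP => Hrk; move: Hm; rewrite -(@RiRk n N i k); last by rewrite eq_sym.
  by rewrite Hr Hrk.
by rewrite mcoeffB (supp_a Hbnd) // (supp_a Hbnd') // subrr.
Qed.

Lemma ind_eq i : (dim_ker (T a i))%:Z - (dim_coker (T a i))%:Z =
                 (dim_ker (T a' i))%:Z - (dim_coker (T a' i))%:Z.
Proof.
have [Hk Hc] := T_fred Hlin Hbnd lG HG1 HG2 i.
have [Hk' Hc'] := T_fred Hlin' Hbnd' lG HG1' HG2' i.
apply: (pert_index (H := XL K n N) (lin_T Hlin i) (lin_T Hlin' i)) => // p.
have -> : T a i p - T a' i p = a i p - a' i p.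
  by rewrite /T /opadd /op1 opprD addrACA subrr add0r.
by rewrite -(proj_supp (diff_supp i p)); apply: proj_Box_lc.
Qed.

End Part2.

Theorem lemma3p6 (K : fieldType) (n : nat) (a : 'I_n -> op K n) :
  [pchar K] =i pred0 ->
  (2 <= n)%N ->
  (forall i, inpC i (a i)) ->
  unitS (one_plus_sum a) ->
  ((forall i, fd_ker (opadd (@op1 K n) (a i)) /\ fd_coker (opadd (@op1 K n) (a i))) /\
   \sum_(i < n) ind (opadd (@op1 K n) (a i)) = 0) /\
  (forall a' : 'I_n -> op K n,
     (forall i, inpC i (a' i)) ->
     (forall p, one_plus_sum a p = one_plus_sum a' p) ->
     forall i, ind (opadd (@op1 K n) (a i)) = ind (opadd (@op1 K n) (a' i))).
Proof.
move=> _ Hn Ha [_ [v [Hv [HG1 HG2]]]].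
have lG := lin_inS Hv.
have Hj : forall i : 'I_n, exists j : 'I_n, j != i.
  move=> i; have H0 : (0 < n)%N by lia.
  have H1 : (1 < n)%N by lia.
  case: (i =P Ordinal H0) => [E|NE].
    by exists (Ordinal H1); rewrite E; apply/eqP => /(congr1 val).
  by exists (Ordinal H0); apply/eqP => E; apply: NE.
have Hlin_of : forall b : 'I_n -> op K n, (forall i, inpC i (b i)) -> forall i, lin (b i).
  by move=> b Hb i; have [j Hji] := Hj i; exact: lin_inp (Hb i j Hji).
have Hbnd_of : forall b b' : 'I_n -> op K n, (forall i, inpC i (b i)) ->
    (forall i, inpC i (b' i)) ->
    exists N, forall i j, j != i -> bnd j N (b i) /\ bnd j N (b' i).
  move=> b b' Hb Hb'.
  pose Q := fun (x : ('I_n * 'I_n)%type) N =>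
     x.2 != x.1 -> bnd x.2 N (b x.1) /\ bnd x.2 N (b' x.1).
  have Hmono : forall x N N', (N <= N')%N -> Q x N -> Q x N'.
    move=> x N N' HNN' H Hx; have [H1 H2] := H Hx.
    by split; apply: bnd_mono HNN' _.
  have Hex : forall x, exists N, Q x N.
    move=> [i j]; rewrite /Q /=; case: (boolP (j != i)) => Hji; last by exists 0%N.
    have [N1 B1] := inp_bnd (Hb i j Hji).
    have [N2 B2] := inp_bnd (Hb' i j Hji).
    exists (maxn N1 N2) => _.
    by split; [apply: bnd_mono B1; apply: leq_maxl | apply: bnd_mono B2; apply: leq_maxr].
  have [N HN] := common_bound Hmono Hex.
  by exists N => i j Hji; apply: (HN (i, j)).
split.
  have [N HN] := Hbnd_of a a Ha Ha.
  have Hbnd : forall i j, j != i -> bnd j N (a i) by move=> i j Hji; exact: (HN i j Hji).1.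
  split.
    move=> i; have [Hk Hc] := T_fred (Hlin_of a Ha) Hbnd lG HG1 HG2 i.
    by split; [exact: fd_ker_of Hk | exact: fd_coker_of Hc].
  have := sum_index (Hlin_of a Ha) Hbnd lG HG1 HG2; rewrite /ind /T; apply.
move=> a' Ha' Heq i.
have [N HN] := Hbnd_of a a' Ha Ha'.
exact: (ind_eq (Hlin_of a Ha) (Hlin_of a' Ha') (fun i j H => (HN i j H).1)
  (fun i j H => (HN i j H).2) lG HG1 HG2 Heq i).
Qed.
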